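(* Let $n\ge 2$ be an integer, $k,c_b>0$, $\rho_0>0$, and let $\lambda_{1,0}\le\cdots\le\lambda_{n,0}$ be real numbers. Consider the system $$\lambda_i'=-\lambda_i^2+\frac{k}{n}(\rho-c_b)\ (i=1,\dots,n),\qquad \rho'=-\rho\lambda,\quad \lambda=\sum_{i=1}^n\lambda_i,\qquad \rho(0)=\rho_0,\ \lambda_i(0)=\lambda_{i,0},$$ suppose its maximal interval of existence is $[0,t_B)$ with $0<t_B<\infty$, and let $u_i(t)=e^{\int_0^t\lambda_i(s)\,ds}$. Let $1\le J_1\le J_2\le n$ be integers such that $\lim_{t\to t_B^-}\lambda_i(t)=-\infty$ for $1\le i\le J_1$ and $\lim_{t\to t_B^-}\lambda_i(t)=+\infty$ for $J_2<i\le n$. Then $\lambda_{i,0}=\lambda_{j,0}$ and $\lambda_i(t)=\lambda_j(t)$ for all $t$ whenever $1\le i,j\le J_1$; $\lim_{t\to t_B^-}\lambda_i(t)/\lambda_j(t)=1$ whenever $J_2<i,j\le n$; and $$\lim_{t\to t_B^-}\frac{u_j(t)}{u_n(t)}=\frac{\lambda_{j,0}-\lambda_{1,0}}{\lambda_{n,0}-\lambda_{1,0}}\qquad\text{for } J_2<j<n.$$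
   Context: Solutions are real-valued and continuously differentiable on $[0,t_B)$. *)

(* Defs.v *)
From Stdlib Require Import Reals.
From Coquelicot Require Import Coquelicot.
Open Scope R_scope.

(* (lam, rho) solves the IVP on [0,T):
   lam' i = - lam_i^2 + k/n (rho - cb),  rho' = - rho * sum_{i=1}^n lam_i,
   rho(0) = rho0, lam_i(0) = lam0 i  (indices i = 1..n).
   Differentiability is required on the open interval (0,T) and
   right-continuity at 0 (one-sided C^1 on [0,T); the derivative is then
   automatically continuous since the right-hand side is). *)
Definition lam_sum (n : nat) (lam : nat -> R -> R) (t : R) : R :=
  sum_f 1 n (fun i => lam i t).

Definition IsSol (n : nat) (k cb rho0 : R) (lam0 : nat -> R) (T : R)
    (lam : nat -> R -> R) (rho : R -> R) : Prop :=
  rho 0 = rho0 /\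
  filterlim rho (at_right 0) (locally rho0) /\
  (forall i, (1 <= i <= n)%nat ->
     lam i 0 = lam0 i /\ filterlim (lam i) (at_right 0) (locally (lam0 i))) /\
  (forall t, 0 < t < T ->
     is_derive rho t (- rho t * lam_sum n lam t) /\
     forall i, (1 <= i <= n)%nat ->
       is_derive (lam i) t (- (lam i t)^2 + k / INR n * (rho t - cb))).

Definition MaxSol (n : nat) (k cb rho0 : R) (lam0 : nat -> R) (tB : R)
    (lam : nat -> R -> R) (rho : R -> R) : Prop :=
  IsSol n k cb rho0 lam0 tB lam rho /\
  forall T, tB < T -> ~ exists lam' rho', IsSol n k cb rho0 lam0 T lam' rho'.

Definition u (lam : nat -> R -> R) (i : nat) (t : R) : R :=
  exp (RInt (lam i) 0 t).

(* Main.v *)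
Require Import Defs.
From Stdlib Require Import Reals Lra Lia.
From Coquelicot Require Import Coquelicot.
Open Scope R_scope.


Lemma ballR x e y : ball x e y <-> Rabs (y - x) < e. Proof. reflexivity. Qed.
Lemma ballR1 x e y : ball x e y -> Rabs (y - x) < e. Proof. auto. Qed.

Definition ext (f : R -> R) (x : R) := f (Rmax x 0).

Lemma at_left_int (T : R) (P : R -> Prop) : 0 < T -> at_left T P ->
  exists s, 0 < s < T /\ forall t, s <= t < T -> P t.
Proof.
  intros HT [e He].
  exists (Rmax (T/2) (T - e/2)).
  split.
  - split. apply Rlt_le_trans with (T/2). lra. apply Rmax_l.
    apply Rmax_lub_lt. lra. destruct e; simpl; lra.
  - intros t Ht. apply He. 2: lra.
    apply ballR. destruct e as [e epos]; simpl in *.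
    assert (T - e/2 <= t) by (apply Rle_trans with (2 := proj1 Ht); apply Rmax_r).
    rewrite Rabs_left; lra.
Qed.

Lemma int_at_left (T s : R) (P : R -> Prop) : s < T ->
  (forall t, s < t < T -> P t) -> at_left T P.
Proof.
  intros Hs H. assert (Hp : 0 < T - s) by lra.
  exists (mkposreal _ Hp). intros y Hy Hy2. apply H.
  apply ballR1 in Hy; simpl in Hy. split; [|exact Hy2].
  rewrite Rabs_left in Hy; lra.
Qed.

Lemma ext_cont (f : R -> R) (T : R) : 0 < T ->
  filterlim f (at_right 0) (locally (f 0)) ->
  (forall x, 0 < x < T -> continuous f x) ->
  forall x, x < T -> continuous (ext f) x.
Proof.
  intros HT Hr Hc x Hx.
  destruct (Rlt_or_le x 0) as [Hneg | Hnn].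
  - apply continuous_ext_loc with (fun _ => f 0).
    + assert (Hp : 0 < - x) by lra. exists (mkposreal _ Hp). intros y Hy.
      apply ballR1 in Hy; simpl in Hy. unfold ext. rewrite Rmax_right. auto.
      apply Rabs_lt_between in Hy. lra.
    + apply continuous_const.
  - destruct Hnn as [Hpos | H0].
    + apply continuous_ext_loc with f.
      * exists (mkposreal _ Hpos). intros y Hy.
        apply ballR1 in Hy; simpl in Hy. unfold ext. rewrite Rmax_left. auto.
        apply Rabs_lt_between in Hy. lra.
      * apply Hc. lra.
    + subst x. unfold continuous. apply filterlim_locally. intros eps.
      pose proof (proj1 (filterlim_locally _ _) Hr eps) as [d Hd].
      exists d. intros y Hy. unfold ext. rewrite (Rmax_left 0 0) by lra.
      destruct (Rlt_or_le 0 y) as [Hy0 | Hy0].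
      * rewrite Rmax_left by lra. apply Hd; auto.
      * rewrite Rmax_right by lra. apply ball_center.
Qed.

Lemma ext_pos (f : R -> R) x : 0 <= x -> ext f x = f x.
Proof. intros H. unfold ext. rewrite Rmax_left; auto. Qed.

Lemma ext_derive (f : R -> R) x l : 0 < x -> is_derive f x l -> is_derive (ext f) x l.
Proof.
  intros Hx H. apply is_derive_ext_loc with f; auto.
  exists (mkposreal _ Hx). intros y Hy. apply ballR1 in Hy; simpl in Hy.
  apply Rabs_lt_between in Hy. unfold ext. rewrite Rmax_left; auto. lra.
Qed.

Lemma derive_RInt_loc (g : R -> R) (T x : R) : 0 < T ->
  (forall y, y < T -> continuous g y) -> x < T ->
  is_derive (fun t => RInt g 0 t) x (g x).
Proof.
  intros HT Hc Hx. apply is_derive_RInt with 0.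
  - assert (Hp : 0 < T - x) by lra. exists (mkposreal _ Hp). intros b Hb.
    apply ballR1 in Hb; simpl in Hb. apply Rabs_lt_between in Hb.
    apply RInt_correct. apply ex_RInt_continuous. intros z Hz. apply Hc.
    apply Rle_lt_trans with (Rmax 0 b). apply Hz. apply Rmax_lub_lt; lra.
  - apply Hc; auto.
Qed.

Definition Fof (l : R -> R) (t : R) := RInt (ext l) 0 t.

Definition Good (l q : R -> R) (T : R) :=
  (forall t, 0 < t < T -> is_derive l t (-(l t)^2 + q t)) /\
  filterlim l (at_right 0) (locally (l 0)).

Lemma is_derive_eq (f : R -> R) x l l' : is_derive f x l -> l = l' -> is_derive f x l'.
Proof. intros H ->; auto. Qed.

Lemma Good_ext_cont l q T : 0 < T -> Good l q T -> forall x, x < T -> continuous (ext l) x.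
Proof.
  intros HT [HD HR]. apply ext_cont; auto.
  intros x Hx. apply (ex_derive_continuous (K:=R_AbsRing) (V:=R_NormedModule)). eexists. apply HD; auto.
Qed.

Lemma Good_F_derive l q T : 0 < T -> Good l q T -> forall x, x < T ->
  is_derive (Fof l) x (ext l x).
Proof.
  intros HT HG x Hx. unfold Fof. apply derive_RInt_loc with T; auto.
  apply (Good_ext_cont l q T HT HG).
Qed.

Lemma Fof0 l : Fof l 0 = 0.
Proof. unfold Fof. rewrite RInt_point. reflexivity. Qed.

Lemma Dconst li lj q T : 0 < T -> Good li q T -> Good lj q T ->
  forall t, 0 <= t < T -> (li t - lj t) * exp (Fof li t + Fof lj t) = li 0 - lj 0.
Proof.
  intros HT Hi Hj t Ht.
  set (D := fun x => (ext li x - ext lj x) * exp (Fof li x + Fof lj x)).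
  assert (HDt : D t = D 0).
  { destruct (MVT_gen D 0 t (fun _ => 0)) as [c [_ Hc]].
    - intros x Hx. rewrite Rmin_left in Hx by lra. rewrite Rmax_right in Hx by lra.
      assert (Hx0 : 0 < x < T) by lra.
      pose proof (ext_derive li x _ (proj1 Hx0) (proj1 Hi x Hx0)) as h1.
      pose proof (ext_derive lj x _ (proj1 Hx0) (proj1 Hj x Hx0)) as h2.
      pose proof (is_derive_plus _ _ x _ _ (Good_F_derive li q T HT Hi x (proj2 Hx0))
                                           (Good_F_derive lj q T HT Hj x (proj2 Hx0))) as hF.
      pose proof (is_derive_comp exp _ x _ _ (is_derive_exp _) hF) as hE.
      pose proof (is_derive_mult _ _ x _ _ (is_derive_minus _ _ x _ _ h1 h2) hE Rmult_comm) as hM.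
      eapply is_derive_eq. exact hM.
      unfold mult, plus, minus, opp, scal; simpl. unfold mult, plus; simpl.
      rewrite !ext_pos by lra. ring.
    - intros x Hx. rewrite Rmin_left in Hx by lra. rewrite Rmax_right in Hx by lra.
      apply continuity_pt_filterlim.
      apply (continuous_mult (fun x => ext li x - ext lj x)).
      + apply (continuous_minus (ext li) (ext lj)).
        apply (Good_ext_cont li q T); auto; lra.
        apply (Good_ext_cont lj q T); auto; lra.
      + apply continuous_exp_comp. apply (ex_derive_continuous (K:=R_AbsRing) (V:=R_NormedModule)).
        eexists. apply (is_derive_plus (Fof li) (Fof lj)).
        apply (Good_F_derive li q T); auto; lra.
        apply (Good_F_derive lj q T); auto; lra.
    - lra. }
  unfold D in HDt. rewrite !ext_pos in HDt by lra. rewrite HDt.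
  rewrite !Fof0. rewrite Rplus_0_r, exp_0. ring.
Qed.

Lemma mono_up (f df : R -> R) s T : (forall x, s <= x < T -> is_derive f x (df x)) ->
  (forall x, s <= x < T -> 0 <= df x) -> forall t, s <= t < T -> f s <= f t.
Proof.
  intros Hd Hp t Ht.
  destruct (MVT_gen f s t df) as [c [Hc Heq]].
  - intros x Hx. rewrite Rmin_left in Hx by lra. rewrite Rmax_right in Hx by lra.
    apply Hd; lra.
  - intros x Hx. rewrite Rmin_left in Hx by lra. rewrite Rmax_right in Hx by lra.
    apply continuity_pt_filterlim.
    apply (ex_derive_continuous (K:=R_AbsRing) (V:=R_NormedModule)). eexists. apply Hd; lra.
  - rewrite Rmin_left in Hc by lra. rewrite Rmax_right in Hc by lra.
    assert (0 <= df c) by (apply Hp; lra).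
    assert (0 <= df c * (t - s)) by (apply Rmult_le_pos; lra). lra.
Qed.

Lemma mono_down (f df : R -> R) s T : (forall x, s <= x < T -> is_derive f x (df x)) ->
  (forall x, s <= x < T -> df x <= 0) -> forall t, s <= t < T -> f t <= f s.
Proof.
  intros Hd Hp t Ht.
  assert (H := mono_up (fun x => - f x) (fun x => - df x) s T).
  enough (- f s <= - f t) by lra. apply H; auto.
  - intros x Hx. apply (is_derive_opp f x (df x)). auto.
  - intros x Hx. specialize (Hp x Hx). lra.
Qed.

Lemma sum_derive (Fm gm : nat -> R -> R) N x :
  (forall i, (i <= N)%nat -> is_derive (Fm i) x (gm i x)) ->
  is_derive (fun t => sum_f_R0 (fun i => Fm i t) N) x (sum_f_R0 (fun i => gm i x) N).
Proof.
  induction N; intros H; simpl.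
  - apply H. lia.
  - apply (is_derive_plus (fun t => sum_f_R0 (fun i => Fm i t) N) (Fm (S N))).
    + apply IHN. intros; apply H; lia.
    + apply H; lia.
Qed.

Lemma rho_pos (rho L S Sd : R -> R) rho0 T : 0 < T -> 0 < rho0 ->
  rho 0 = rho0 -> filterlim rho (at_right 0) (locally rho0) ->
  (forall t, 0 < t < T -> is_derive rho t (- rho t * L t)) ->
  (forall x, x < T -> is_derive S x (Sd x)) -> S 0 = 0 ->
  (forall t, 0 < t < T -> Sd t = L t) ->
  forall t, 0 <= t < T -> 0 < rho t.
Proof.
  intros HT Hr0 Hrho0 Hrl Hd HS HS0 HSd t Ht.
  set (H := fun x => ext rho x * exp (S x)).
  assert (HHt : H t = H 0).
  { destruct (MVT_gen H 0 t (fun _ => 0)) as [c [_ Hc]].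
    - intros x Hx. rewrite Rmin_left in Hx by lra. rewrite Rmax_right in Hx by lra.
      assert (Hx0 : 0 < x < T) by lra.
      pose proof (ext_derive rho x _ (proj1 Hx0) (Hd x Hx0)) as h1.
      pose proof (is_derive_comp exp _ x _ _ (is_derive_exp _) (HS x (proj2 Hx0))) as hE.
      pose proof (is_derive_mult _ _ x _ _ h1 hE Rmult_comm) as hM.
      eapply is_derive_eq. exact hM.
      unfold mult, plus, minus, opp, scal; simpl. unfold mult, plus; simpl.
      rewrite !ext_pos by lra. rewrite HSd by lra. ring.
    - intros x Hx. rewrite Rmin_left in Hx by lra. rewrite Rmax_right in Hx by lra.
      apply continuity_pt_filterlim.
      apply (continuous_mult (ext rho)).
      + apply ext_cont with T; auto. rewrite Hrho0; auto.
        intros y Hy. apply (ex_derive_continuous (K:=R_AbsRing) (V:=R_NormedModule)).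
        eexists. apply Hd; auto.
        lra.
      + apply continuous_exp_comp. apply (ex_derive_continuous (K:=R_AbsRing) (V:=R_NormedModule)).
        eexists. apply HS. lra.
    - lra. }
  unfold H in HHt. rewrite !ext_pos in HHt by lra. rewrite HS0, exp_0, Rmult_1_r, Hrho0 in HHt.
  pose proof (exp_pos (S t)). nra.
Qed.

Lemma neg_bound l q T a : 0 < T -> Good l q T -> 0 <= a ->
  (forall t, 0 < t < T -> - a <= q t) -> at_left T (fun t => l t < 0) ->
  exists B, 0 < B /\ at_left T (fun t => - l t * exp (Fof l t) <= B).
Proof.
  intros HT HG Ha Hq Hneg.
  destruct (at_left_int T _ HT Hneg) as [s [Hs Hsl]].
  set (U := exp (Fof l s)).
  assert (HU : forall t, s <= t < T -> exp (Fof l t) <= U).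
  { intros t Ht. unfold U. destruct (Req_dec (Fof l t) (Fof l s)) as [E|E].
    rewrite E; lra. left. apply exp_increasing.
    destruct (mono_down (Fof l) (ext l) s T) with (t := t) as [H|H]; auto.
    - intros x Hx. apply (Good_F_derive l q T); auto; lra.
    - intros x Hx. rewrite ext_pos by lra. left. apply Hsl; auto.
    - contradiction. }
  set (h := fun x => l x * exp (Fof l x) + (a * U) * x).
  assert (Hh : forall t, s <= t < T -> h s <= h t).
  { apply mono_up with (df := fun x => (- (l x)^2 + q x) * exp (Fof l x) + l x * (exp (Fof l x) * l x) + a * U).
    - intros x Hx. assert (Hx0 : 0 < x < T) by lra.
      pose proof (is_derive_comp exp _ x _ _ (is_derive_exp _) (Good_F_derive l q T HT HG x (proj2 Hx0))) as hE.
      pose proof (is_derive_mult _ _ x _ _ (proj1 HG x Hx0) hE Rmult_comm) as hM.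
      pose proof (is_derive_scal (fun t => t) x (a * U) _ (is_derive_id x)) as hL.
      pose proof (is_derive_plus _ _ x _ _ hM hL) as hP.
      eapply is_derive_eq. exact hP.
      unfold mult, plus, minus, opp, scal, one; simpl. unfold mult, plus; simpl.
      rewrite !ext_pos by lra. ring.
    - intros x Hx. assert (Hx0 : 0 < x < T) by lra.
      pose proof (Hq x Hx0). pose proof (HU x Hx). pose proof (exp_pos (Fof l x)).
      assert (- a * exp (Fof l x) <= q x * exp (Fof l x)) by (apply Rmult_le_compat_r; lra).
      assert (a * exp (Fof l x) <= a * U) by (apply Rmult_le_compat_l; lra).
      nra. }
  exists (Rmax 1 (- h s + a * U * T)). split.
  - apply Rlt_le_trans with 1. lra. apply Rmax_l.
  - apply int_at_left with s. lra. intros t Ht.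
    apply Rle_trans with (- h s + a * U * T); [|apply Rmax_r].
    pose proof (Hh t (conj (Rlt_le _ _ (proj1 Ht)) (proj2 Ht))).
    unfold h in *. assert (0 <= a * U) by (apply Rmult_le_pos; auto; unfold U; left; apply exp_pos).
    assert (a * U * t <= a * U * T) by (apply Rmult_le_compat_l; lra).
    lra.
Qed.

Lemma lim_minf (l : R -> R) T : filterlim l (at_left T) (Rbar_locally m_infty) ->
  forall M, at_left T (fun t => l t < M).
Proof. intros H M. apply (H (fun x => x < M)). exists M. auto. Qed.

Lemma lim_pinf (l : R -> R) T : filterlim l (at_left T) (Rbar_locally p_infty) ->
  forall M, at_left T (fun t => M < l t).
Proof. intros H M. apply (H (fun x => M < x)). exists M. auto. Qed.

Lemma pos_lower l q T : 0 < T -> Good l q T -> at_left T (fun t => 0 < l t) ->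
  exists c, 0 < c /\ at_left T (fun t => c <= exp (Fof l t)).
Proof.
  intros HT HG Hp.
  destruct (at_left_int T _ HT Hp) as [s [Hs Hsl]].
  exists (exp (Fof l s)). split. apply exp_pos.
  apply int_at_left with s. lra. intros t Ht.
  assert (Fof l s <= Fof l t).
  { apply (mono_up (Fof l) (ext l) s T).
    - intros x Hx. apply (Good_F_derive l q T); auto; lra.
    - intros x Hx. rewrite ext_pos by lra. left. apply Hsl; auto.
    - lra. }
  destruct H as [H|H]. left. apply exp_increasing; auto. rewrite H; lra.
Qed.

Lemma at_left_pos T : 0 < T -> at_left T (fun t => 0 < t < T).
Proof. intros HT. apply int_at_left with 0; auto. Qed.

Lemma core1 li lj q T a : 0 < T -> Good li q T -> Good lj q T -> 0 <= a ->
  (forall t, 0 < t < T -> - a <= q t) ->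
  filterlim li (at_left T) (Rbar_locally m_infty) ->
  filterlim lj (at_left T) (Rbar_locally m_infty) ->
  0 < li 0 - lj 0 -> False.
Proof.
  intros HT Hi Hj Ha Hq Li Lj Hd.
  set (d0 := li 0 - lj 0) in *.
  destruct (neg_bound li q T a HT Hi Ha Hq (lim_minf li T Li 0)) as [Bi [HBi Evi]].
  destruct (neg_bound lj q T a HT Hj Ha Hq (lim_minf lj T Lj 0)) as [Bj [HBj Evj]].
  assert (HBB : 0 < Bi * Bj / d0) by (apply Rdiv_lt_0_compat; auto; apply Rmult_lt_0_compat; auto).
  pose proof (filter_and _ _ (at_left_pos T HT)
               (filter_and _ _ (lim_minf li T Li (- (Bi * Bj / d0)))
                 (filter_and _ _ Evi (filter_and _ _ Evj (lim_minf lj T Lj 0))))) as Hall.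
  destruct (filter_ex _ Hall) as [t [Ht0 [Hlt [Hbi [Hbj Hlj]]]]].
  assert (Hdi := Dconst li lj q T HT Hi Hj t (conj (Rlt_le _ _ (proj1 Ht0)) (proj2 Ht0))).
  rewrite exp_plus in Hdi. fold d0 in Hdi.
  pose proof (exp_pos (Fof li t)). pose proof (exp_pos (Fof lj t)).
  set (ui := exp (Fof li t)) in *. set (uj := exp (Fof lj t)) in *.
  assert (li t * ui * uj < 0).
  { assert (0 < ui * uj) by (apply Rmult_lt_0_compat; auto).
    assert (li t < 0) by lra. nra. }
  assert (d0 < Bj * ui).
  { assert (- lj t * uj * ui <= Bj * ui) by (apply Rmult_le_compat_r; lra). nra. }
  assert (d0 * (- li t) < Bj * ui * (- li t)) by (apply Rmult_lt_compat_r; lra).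
  assert (Bj * (- li t * ui) <= Bj * Bi) by (apply Rmult_le_compat_l; lra).
  assert (Bi * Bj / d0 * d0 < - li t * d0) by (apply Rmult_lt_compat_r; lra).
  unfold Rdiv in H5. rewrite Rmult_assoc, Rinv_l, Rmult_1_r in H5 by lra.
  nra.
Qed.

Lemma pair_bound li lj q T : 0 < T -> Good li q T -> Good lj q T ->
  at_left T (fun t => 0 < li t) -> at_left T (fun t => 0 < lj t) ->
  exists M, at_left T (fun t => Rabs (li t - lj t) <= M).
Proof.
  intros HT Hi Hj Pi Pj.
  destruct (pos_lower li q T HT Hi Pi) as [ci [Hci Ei]].
  destruct (pos_lower lj q T HT Hj Pj) as [cj [Hcj Ej]].
  exists (Rabs (li 0 - lj 0) / (ci * cj)).
  generalize (filter_and _ _ (at_left_pos T HT) (filter_and _ _ Ei Ej)).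
  apply filter_imp. intros t [Ht [Hi' Hj']].
  assert (Hdi := Dconst li lj q T HT Hi Hj t (conj (Rlt_le _ _ (proj1 Ht)) (proj2 Ht))).
  rewrite exp_plus in Hdi.
  set (ui := exp (Fof li t)) in *. set (uj := exp (Fof lj t)) in *.
  rewrite <- Hdi. rewrite Rabs_mult, (Rabs_right (ui * uj)) by nra.
  assert (0 < ci * cj) by nra.
  apply Rmult_le_reg_r with (ci * cj); auto.
  unfold Rdiv. rewrite Rmult_assoc, Rinv_l, Rmult_1_r by lra.
  pose proof (Rabs_pos (li t - lj t)).
  assert (ci * cj <= ui * uj) by nra. nra.
Qed.

Lemma ratio_lim (A B f : R -> R) c T M :
  at_left T (fun t => Rabs (A t - B t) <= M) ->
  (forall M', at_left T (fun t => M' < B t)) ->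
  at_left T (fun t => c * (A t / B t) = f t) ->
  filterlim f (at_left T) (locally c).
Proof.
  intros HM HB Hf.
  apply filterlim_ext_loc with (fun t => c * (A t / B t)); auto.
  apply filterlim_locally. intros [eps Heps]. simpl.
  generalize (filter_and _ _ HM (filter_and _ _ (HB 0) (HB (Rabs c * Rabs M / eps)))).
  apply filter_imp. intros t [H1 [H2 H3]]. apply ballR.
  replace (c * (A t / B t) - c) with (c * (A t - B t) / B t) by (field; lra).
  unfold Rdiv. rewrite Rabs_mult, Rabs_mult, Rabs_inv, (Rabs_right (B t)) by lra.
  apply Rmult_lt_reg_r with (B t); auto.
  rewrite Rmult_assoc, Rinv_l, Rmult_1_r by lra.
  assert (Rabs c * Rabs (A t - B t) <= Rabs c * Rabs M).
  { apply Rmult_le_compat_l. apply Rabs_pos. apply Rle_trans with M; auto. apply RRle_abs. }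
  assert (Rabs c * Rabs M / eps * eps < B t * eps) by (apply Rmult_lt_compat_r; auto).
  unfold Rdiv in H0. rewrite Rmult_assoc, Rinv_l, Rmult_1_r in H0 by lra.
  lra.
Qed.

Lemma u_Fof (lam : nat -> R -> R) i t : 0 <= t -> u lam i t = exp (Fof (lam i) t).
Proof.
  intros Ht. unfold u, Fof. f_equal. apply RInt_ext. intros x Hx.
  rewrite Rmin_left in Hx by lra. rewrite Rmax_right in Hx by lra.
  symmetry. apply ext_pos. lra.
Qed.

Theorem lemma3p1 (n : nat) (k cb rho0 tB : R) (lam0 : nat -> R)
    (lam : nat -> R -> R) (rho : R -> R) (J1 J2 : nat) :
  (2 <= n)%nat -> 0 < k -> 0 < cb -> 0 < rho0 ->
  (forall i, (1 <= i)%nat -> (i < n)%nat -> lam0 i <= lam0 (S i)) ->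
  0 < tB ->
  MaxSol n k cb rho0 lam0 tB lam rho ->
  (1 <= J1)%nat -> (J1 <= J2)%nat -> (J2 <= n)%nat ->
  (forall i, (1 <= i <= J1)%nat ->
     filterlim (lam i) (at_left tB) (Rbar_locally m_infty)) ->
  (forall i, (J2 < i <= n)%nat ->
     filterlim (lam i) (at_left tB) (Rbar_locally p_infty)) ->
  (forall i j, (1 <= i <= J1)%nat -> (1 <= j <= J1)%nat ->
     lam0 i = lam0 j /\ forall t, 0 <= t < tB -> lam i t = lam j t) /\
  (forall i j, (J2 < i <= n)%nat -> (J2 < j <= n)%nat ->
     filterlim (fun t => lam i t / lam j t) (at_left tB) (locally 1)) /\
  (forall j, (J2 < j < n)%nat ->
     filterlim (fun t => u lam j t / u lam n t) (at_left tB)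
       (locally ((lam0 j - lam0 1%nat) / (lam0 n - lam0 1%nat)))).
Proof.
  intros Hn Hk Hcb Hr0 Hmono HT [[Hrho0 [Hrhol [Hlam Hder]]] _] HJ1 HJ12 HJ2 Lm Lp.
  set (q := fun t => k / INR n * (rho t - cb)).
  assert (HG : forall i, (1 <= i <= n)%nat -> Good (lam i) q tB).
  { intros i Hi. split.
    - intros t Ht. apply (proj2 (Hder t Ht) i Hi).
    - destruct (Hlam i Hi) as [E L]. rewrite E. exact L. }
  assert (Hl0 : forall i, (1 <= i <= n)%nat -> lam i 0 = lam0 i) by (intros; apply Hlam; auto).
  assert (Hrpos : forall t, 0 <= t < tB -> 0 < rho t).
  { apply (rho_pos rho (lam_sum n lam) (fun x => sum_f 1 n (fun i => Fof (lam i) x))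
                   (fun x => sum_f 1 n (fun i => ext (lam i) x)) rho0 tB); auto.
    - intros t Ht. apply (proj1 (Hder t Ht)).
    - intros x Hx. unfold sum_f.
      apply (sum_derive (fun i => Fof (lam (i + 1)%nat)) (fun i => ext (lam (i + 1)%nat))).
      intros i Hi. apply (Good_F_derive _ q tB); auto. apply HG. lia.
    - unfold sum_f. rewrite (sum_eq _ (fun _ => 0)). rewrite sum_cte; ring.
      intros; apply Fof0.
    - intros t Ht. unfold lam_sum, sum_f. apply sum_eq. intros. apply ext_pos. lra. }
  assert (HnR : 0 < INR n) by (apply lt_0_INR; lia).
  assert (Hkn : 0 < k / INR n) by (apply Rdiv_lt_0_compat; auto).
  set (a := k / INR n * cb).
  assert (Ha : 0 <= a) by (unfold a; left; apply Rmult_lt_0_compat; auto).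
  assert (Hq : forall t, 0 < t < tB -> - a <= q t).
  { intros t Ht. unfold q, a. pose proof (Hrpos t (conj (Rlt_le _ _ (proj1 Ht)) (proj2 Ht))).
    assert (0 < k / INR n * rho t) by (apply Rmult_lt_0_compat; auto). nra. }
  split; [|split].
  - intros i j Hi Hj.
    assert (Gi : Good (lam i) q tB) by (apply HG; lia).
    assert (Gj : Good (lam j) q tB) by (apply HG; lia).
    assert (E : lam0 i = lam0 j).
    { rewrite <- (Hl0 i), <- (Hl0 j) by lia.
      destruct (Rtotal_order (lam i 0) (lam j 0)) as [H|[H|H]]; auto.
      - exfalso. apply (core1 (lam j) (lam i) q tB a); auto; lra.
      - exfalso. apply (core1 (lam i) (lam j) q tB a); auto; lra. }
    split; auto. intros t Ht.
    pose proof (Dconst (lam i) (lam j) q tB HT Gi Gj t Ht) as HD.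
    rewrite (Hl0 i), (Hl0 j), E in HD by lia.
    pose proof (exp_pos (Fof (lam i) t + Fof (lam j) t)).
    assert (lam i t - lam j t = 0) by nra. lra.
  - intros i j Hi Hj.
    assert (Gi : Good (lam i) q tB) by (apply HG; lia).
    assert (Gj : Good (lam j) q tB) by (apply HG; lia).
    destruct (pair_bound (lam i) (lam j) q tB HT Gi Gj (lim_pinf _ _ (Lp i Hi) 0) (lim_pinf _ _ (Lp j Hj) 0)) as [M HM].
    apply (ratio_lim (lam i) (lam j) _ 1 tB M HM (lim_pinf _ _ (Lp j Hj))).
    apply filter_forall. intros; ring.
  - intros j Hj.
    assert (Gj : Good (lam j) q tB) by (apply HG; lia).
    assert (Gn : Good (lam n) q tB) by (apply HG; lia).
    assert (G1 : Good (lam 1%nat) q tB) by (apply HG; lia).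
    assert (Pj := lim_pinf _ _ (Lp j ltac:(lia))).
    assert (Pn := lim_pinf _ _ (Lp n ltac:(lia))).
    assert (M1 := lim_minf _ _ (Lm 1%nat ltac:(lia))).
    destruct (pair_bound (lam n) (lam j) q tB HT Gn Gj (Pn 0) (Pj 0)) as [M HM].
    apply (ratio_lim (fun t => lam n t - lam 1%nat t) (fun t => lam j t - lam 1%nat t) _ _ tB M).
    + generalize HM. apply filter_imp. intros t Ht.
      replace (lam n t - lam 1%nat t - (lam j t - lam 1%nat t)) with (lam n t - lam j t) by ring. auto.
    + intros M'. generalize (filter_and _ _ (Pj M') (M1 0)). apply filter_imp.
      intros t [H1 H2]. lra.
    + generalize (filter_and _ _ (at_left_pos tB HT)
                   (filter_and _ _ (Pj 0) (filter_and _ _ (Pn 0) (M1 0)))).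
      apply filter_imp. intros t [Ht [H1 [H2 H3]]].
      assert (Ht' : 0 <= t < tB) by lra.
      pose proof (Dconst (lam j) (lam 1%nat) q tB HT Gj G1 t Ht') as Dj.
      pose proof (Dconst (lam n) (lam 1%nat) q tB HT Gn G1 t Ht') as Dn.
      rewrite (Hl0 j), (Hl0 n), (Hl0 1%nat) in * by lia.
      rewrite exp_plus in Dj, Dn.
      rewrite !u_Fof by lra.
      pose proof (exp_pos (Fof (lam j) t)). pose proof (exp_pos (Fof (lam n) t)).
      pose proof (exp_pos (Fof (lam 1%nat) t)).
      rewrite <- Dj, <- Dn. field. repeat split; lra.
Qed.
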